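(* Let $\mathcal{V}$ be a real vector space of dimension $d$, let $\tau\in\vee^2\mathcal{V}^*$ have rank $p+1$ and Lorentzian signature, and let $\gamma$ be a positive-definite metric on $\mathrm{Ker}(\tau)=\{v\in\mathcal{V}:\tau(v,\cdot)=0\}$. Let $f_p(\mathcal{V},\tau,\gamma)$ be the set of frames $(\tau_A,e_i)$ of $\mathcal{V}$ ($A=0,\dots,p$, $i=1,\dots,d-p-1$) with $e_i\in\mathrm{Ker}(\tau)$, $\tau(\tau_A,\tau_B)=\eta_{AB}$ and $\gamma(e_i,e_j)=\delta_{ij}$. Then the formula $$(\tau_A,e_i)\cdot g=\big({\Lambda^A}_B\tau_A+{v^i}_Be_i,\ {R^i}_je_i\big),\qquad g=\begin{pmatrix}{\Lambda^A}_B&0\\ {v^i}_B&{R^i}_j\end{pmatrix}\in G_p,$$ defines a right action of $G_p$ on $f_p(\mathcal{V},\tau,\gamma)$ which is free and transitive, i.e.\ $f_p(\mathcal{V},\tau,\gamma)$ is a $G_p$-torsor.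
   Context: $\eta_{AB}=\mathrm{diag}(-1,1,\dots,1)$ is the Lorentz metric in $p+1$ dimensions. $G_p$ is the group of $d\times d$ real block matrices $\begin{pmatrix}\Lambda&0\\ v&R\end{pmatrix}$ with $\Lambda\in O(1,p)$, $R\in O(d-p-1)$ and $v$ an arbitrary real $(d-p-1)\times(p+1)$ matrix. *)

(* Defs.v *)
(* V = 'rV[R]_d with d = p.+1 + n, R : realType. *)
From HB Require Import structures.
From mathcomp Require Import all_boot all_order all_algebra.
From mathcomp Require Import reals.
Set Implicit Arguments. Unset Strict Implicit. Unset Printing Implicit Defensive.
Import Order.TTheory GRing.Theory Num.Theory.
Local Open Scope ring_scope.

Section Defs.
Variable R : realType.

Definition eta (p : nat) : 'M[R]_(p.+1) :=
  \matrix_(A, B) (if A == B then (if A == ord0 then -1 else 1) else 0).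

Variables (p n : nat).
Local Notation d := (p.+1 + n)%N.

Definition form (T : 'M[R]_d) (u v : 'rV[R]_d) : R := (u *m T *m v^T) 0 0.

(* tau has rank p+1 and Lorentzian signature: in some basis it is
   diag(-1,1,..,1,0,..,0) with p+1 nonzero entries (Sylvester normal form) *)
Definition lorentzian_rank (T : 'M[R]_d) : Prop :=
  exists P : 'M[R]_d, P \in unitmx /\
    P *m T *m P^T = block_mx (eta p) 0 0 (0 : 'M[R]_n).

Definition inKer (T : 'M[R]_d) (v : 'rV[R]_d) : Prop := v *m T = 0.

(* gamma : a positive-definite (symmetric bilinear) metric on Ker(tau);
   represented by a matrix Gm, only its values on Ker(tau) matter *)
Definition pos_metric_on_ker (T Gm : 'M[R]_d) : Prop :=
  (forall u v, inKer T u -> inKer T v -> form Gm u v = form Gm v u) /\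
  (forall v, inKer T v -> v != 0 -> 0 < form Gm v v).

(* A frame (tau_A, e_i) is a basis of V, stored as the rows of a d x d matrix:
   row (lshift n A) F = tau_A, row (rshift p.+1 i) F = e_i. *)
Definition frame_tau (F : 'M[R]_d) : 'M[R]_(p.+1, d) := usubmx F.
Definition frame_e (F : 'M[R]_d) : 'M[R]_(n, d) := dsubmx F.

Definition in_fp (T Gm F : 'M[R]_d) : Prop :=
  F \in unitmx /\
  (forall i, inKer T (row i (frame_e F))) /\
  frame_tau F *m T *m (frame_tau F)^T = eta p /\
  frame_e F *m Gm *m (frame_e F)^T = 1%:M.

Definition inLorentz (L : 'M[R]_(p.+1)) : Prop := L^T *m eta p *m L = eta p.
Definition inOrth (Q : 'M[R]_n) : Prop := Q^T *m Q = 1%:M.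
Definition inGp (g : 'M[R]_d) : Prop :=
  exists (L : 'M[R]_(p.+1)) (v : 'M[R]_(n, p.+1)) (Q : 'M[R]_n),
    inLorentz L /\ inOrth Q /\ g = block_mx L 0 v Q.

(* (tau_A, e_i) . g = (Lambda^A_B tau_A + v^i_B e_i, R^i_j e_i):
   new B-th row = sum_A g_{AB} (old A-th row) etc., i.e. F . g = g^T *m F *)
End Defs.

Definition frame_act (R : realType) (m : nat) (F g : 'M[R]_m) : 'M[R]_m := g^T *m F.

(* Main.v *)
Require Import Defs.
From HB Require Import structures.
From mathcomp Require Import all_boot all_order all_algebra.
From mathcomp Require Import reals.
Import Order.TTheory GRing.Theory Num.Theory.
Local Open Scope ring_scope.

Lemma pd_congr (R : realType) n (M : 'M[R]_n) :
  M^T = M -> (forall x : 'rV_n, x != 0 -> 0 < (x *m M *m x^T) 0 0) ->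
  exists Q : 'M_n, Q *m M *m Q^T = 1%:M.
Proof.
elim: n M => [|n IH] M sM pM.
  by exists 0; apply/matrixP => -[].
move: M sM pM; change n.+1 with (1 + n)%N => M sM pM.
rewrite -[M]submxK in sM pM *.
set a := ulsubmx M in sM pM *; set b := ursubmx M in sM pM *.
set c := dlsubmx M in sM pM *; set D := drsubmx M in sM pM *.
rewrite tr_block_mx in sM; case/eq_block_mx: sM => sa sb sc sD.
set al := a 0 0.
have ha : a = al%:M by apply: mx11_scalar.
have alpos : 0 < al.
  have := pM (row_mx 1%:M 0).
  rewrite mul_row_block tr_row_mx mul_row_col !mul1mx !mul0mx !addr0 trmx0 mulmx0 addr0 trmx1 mulmx1.
  apply.
  apply/eqP => /matrixP/(_ 0 (lshift n 0)); rewrite row_mxEl !mxE /=.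
  by move/eqP; rewrite oner_eq0.
set s := Num.sqrt al.
have s2 : s * s = al by rewrite -expr2 sqr_sqrtr // ltW.
have spos : 0 < s by rewrite sqrtr_gt0.
have sN0 : s != 0 by rewrite gt_eqF.
have alN0 : al != 0 by rewrite gt_eqF.
set S : 'M_1 := (s^-1)%:M.
set D' := D - al^-1 *: (c *m b).
set E1 : 'M_(1 + n) := block_mx S 0 (- (al^-1 *: c)) 1%:M.
have hE : E1 *m block_mx a b c D *m E1^T = block_mx 1%:M 0 0 D'.
  rewrite /E1 tr_block_mx !mulmx_block ha.
  have k0 : - (al^-1 *: c) *m al%:M + c = 0.
    by rewrite mul_mx_scalar scalerN scalerA mulfV // scale1r addNr.
  rewrite ?trmx0 ?mulmx0 ?mul0mx ?addr0 ?add0r ?trmx1 ?mulmx1 ?mul1mx k0 ?mul0mx.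
  rewrite add0r /S tr_scalar_mx -!scalar_mxM.
  rewrite [X in block_mx X%:M _ _ _](_ : _ = 1); last first.
    by rewrite -s2 mulrA mulVf // mul1r mulfV.
  have tc : (- (al^-1 *: c))^T = - (al^-1 *: b) by rewrite -sb; apply/matrixP => i j; rewrite !mxE.
  rewrite tc mulmxN -scalemxAr !mul_scalar_mx scalerA.
  rewrite [X in - (X *: b)](_ : _ = s^-1); last by rewrite mulrCA mulVf // mulr1.
  by rewrite addNr mulNmx -scalemxAl addrC.
have uE : E1 \in unitmx.
  by rewrite unitmxE /E1 det_lblock det1 mulr1 /S det_scalar expr1 unitfE invr_eq0.
have sD' : D'^T = D'.
  rewrite /D' raddfB /= sD; congr (_ - _).
  rewrite -sc; apply/matrixP => i j; rewrite !mxE; congr (_ * _).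
  by apply: eq_bigr => k _; rewrite !mxE mulrC.
have key : forall m (x : 'M_(m, 1 + n)), x *m E1 *m block_mx a b c D *m (x *m E1)^T =
    x *m (E1 *m block_mx a b c D *m E1^T) *m x^T.
  by move=> m x; rewrite trmx_mul !mulmxA.
have pD' : forall y : 'rV_n, y != 0 -> 0 < (y *m D' *m y^T) 0 0.
  move=> y yN0.
  have zN0 : row_mx (0 : 'rV_1) y *m E1 != 0.
    apply: contra yN0 => /eqP h.
    have : row_mx (0 : 'rV_1) y = 0.
      by rewrite -[row_mx _ _](mulmxK uE) h mul0mx.
    by rewrite -row_mx0 => /eq_row_mx [_ ->].
  have := pM _ zN0.
  rewrite key hE.
  rewrite mul_row_block tr_row_mx mul_row_col ?mul0mx ?mulmx0 ?add0r ?addr0.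
  by rewrite ?trmx0 ?mulmx0 ?add0r ?addr0.
have [Q' hQ'] := IH D' sD' pD'.
exists (block_mx 1%:M 0 0 Q' *m E1).
rewrite key hE tr_block_mx !mulmx_block.
rewrite !mul0mx !mulmx0 !addr0 !add0r !mul1mx trmx0 !mulmx0 trmx1 !mulmx1 hQ'.
rewrite ?trmx0 ?mulmx0 ?mul0mx ?addr0 ?add0r.
by rewrite scalar_mx_block.
Qed.
Lemma eta2 (R : realType) (p : nat) : @Defs.eta R p *m @Defs.eta R p = 1%:M.
Proof.
apply/matrixP => i j; rewrite !mxE (bigD1 i) //= big1 ?addr0 => [|k ki]; last first.
  by rewrite !mxE eq_sym (negbTE ki) mul0r.
rewrite !mxE eqxx eq_sym; case: (i == j); last by rewrite mulr0.
by case: (ord0 == i); rewrite ?mulrNN mulr1.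
Qed.

Lemma quad2 (R : realType) k m d (X : 'M[R]_(k, m)) (Y : 'M_(m, d)) G :
  (X *m Y) *m G *m (X *m Y)^T = X *m (Y *m G *m Y^T) *m X^T.
Proof. by rewrite trmx_mul !mulmxA. Qed.

Lemma quad (R : realType) k m1 m2 d (a : 'M[R]_(k, m1)) (b : 'M_(k, m2)) t e (T : 'M_d) :
  e *m T = 0 -> T *m e^T = 0 ->
  (a *m t + b *m e) *m T *m (a *m t + b *m e)^T = a *m (t *m T *m t^T) *m a^T.
Proof.
move=> eT Te.
rewrite mulmxDl -(mulmxA b) eT mulmx0 addr0 raddfD /= mulmxDr.
rewrite [X in _ + X](_ : _ = 0); last first.
  by rewrite trmx_mul !mulmxA -(mulmxA _ T) Te mulmx0 mul0mx.
by rewrite addr0 quad2.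
Qed.

Lemma rowsK (R : realType) k d m (e : 'M[R]_(k, d)) (T : 'M_(d, m)) :
  (forall i, row i e *m T = 0) -> e *m T = 0.
Proof. by move=> h; apply/row_matrixP => i; rewrite row_mul h row0. Qed.

Lemma symm_form (R : realType) k (M : 'M[R]_k) :
  (forall x y : 'rV_k, (x *m M *m y^T) 0 0 = (y *m M *m x^T) 0 0) -> M^T = M.
Proof.
move=> h; apply/matrixP => i j.
have := h (delta_mx 0 j) (delta_mx 0 i).
rewrite !trmx_delta -!rowE -!colE !mxE => ->; by [].
Qed.

Lemma unit_lorentz (R : realType) p (L : 'M[R]_p.+1) : inLorentz L -> L \in unitmx.
Proof.
move=> hL.
have : (Defs.eta R p *m L^T *m Defs.eta R p) *m L = 1%:M.
  by rewrite -mulmxA -mulmxA (mulmxA L^T) hL eta2.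
by case/mulmx1_unit.
Qed.

Lemma closure (R : realType) p n (T Gm : 'M[R]_(p.+1 + n)) t e L v Q :
  T^T = T -> in_fp T Gm (col_mx t e) -> inLorentz L -> inOrth Q ->
  in_fp T Gm (frame_act (col_mx t e) (block_mx L 0 v Q)).
Proof.
move=> sT [uF [kF [tF eF]]] hL hQ.
rewrite /frame_tau /frame_e col_mxKu col_mxKd in kF tF eF.
have eT : e *m T = 0 by apply: rowsK.
have Te : T *m e^T = 0 by rewrite -sT -trmx_mul eT trmx0.
rewrite /in_fp /frame_act /frame_tau /frame_e tr_block_mx trmx0 mul_block_col.
rewrite col_mxKu col_mxKd mul0mx add0r.
split; [|split; [|split]].
- rewrite (_ : col_mx _ _ = (block_mx L 0 v Q)^T *m col_mx t e); last first.
    by rewrite tr_block_mx trmx0 mul_block_col mul0mx add0r.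
  rewrite unitmx_mul uF andbT unitmx_tr unitmxE det_lblock unitrM -!unitmxE unit_lorentz //=.
  by case: (mulmx1_unit hQ).
- by move=> i; rewrite /inKer row_mul -mulmxA eT mulmx0.
- by rewrite quad // tF trmxK hL.
- by rewrite quad2 eF mulmx1 trmxK hQ.
Qed.

Lemma frame_trans (R : realType) p n (T Gm : 'M[R]_(p.+1 + n)) t1 e1 t2 e2 :
  T^T = T -> in_fp T Gm (col_mx t1 e1) -> in_fp T Gm (col_mx t2 e2) ->
  exists! g : 'M[R]_(p.+1 + n), inGp g /\ frame_act (col_mx t1 e1) g = col_mx t2 e2.
Proof.
move=> sT [uF1 [kF1 [tF1 eF1]]] [uF2 [kF2 [tF2 eF2]]].
rewrite /frame_tau /frame_e col_mxKu col_mxKd in kF1 tF1 eF1.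
rewrite /frame_tau /frame_e col_mxKu col_mxKd in kF2 tF2 eF2.
have e1T : e1 *m T = 0 by apply: rowsK.
have Te1 : T *m e1^T = 0 by rewrite -sT -trmx_mul e1T trmx0.
have e2T : e2 *m T = 0 by apply: rowsK.
set X := col_mx t2 e2 *m invmx (col_mx t1 e1).
exists X^T; split.
  split; last by rewrite /frame_act trmxK /X mulmxKV.
  have hX : X *m col_mx t1 e1 = col_mx t2 e2 by rewrite /X mulmxKV.
  rewrite -[X]submxK in hX *.
  set a := ulsubmx X in hX *; set b := ursubmx X in hX *.
  set c := dlsubmx X in hX *; set dd := drsubmx X in hX *.
  rewrite mul_block_col in hX; case/eq_col_mx: hX => h1 h2.
  have c0 : c = 0.
    have : (c *m t1 + dd *m e1) *m T *m t1^T = 0 by rewrite h2 e2T mul0mx.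
    rewrite mulmxDl mulmxDl -(mulmxA dd) e1T mulmx0 mul0mx addr0 -!mulmxA (mulmxA t1) tF1 => h.
    by rewrite -[c]mulmx1 -eta2 mulmxA h mul0mx.
  rewrite c0 tr_block_mx trmx0; exists a^T, b^T, dd^T; split; [|split] => //.
    by rewrite /inLorentz trmxK -{1}tF1 -(quad _ _ _ _ _ a b t1 e1) // h1 tF2.
  rewrite c0 mul0mx add0r in h2.
  by rewrite /inOrth trmxK -eF2 -h2 quad2 eF1 mulmx1.
move=> g' [_ hg']; rewrite /frame_act in hg'.
apply: trmx_inj; rewrite trmxK /X -hg' mulmxK //.
Qed.

Lemma exists_frame (R : realType) (p n : nat) (T Gm : 'M[R]_(p.+1 + n)) :
  T^T = T -> lorentzian_rank T -> pos_metric_on_ker T Gm ->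
  exists F : 'M[R]_(p.+1 + n), in_fp T Gm F.
Proof.
move=> sT [P [uP hP]] [symG posG].
rewrite -[P]vsubmxK in uP hP.
set t := usubmx P in uP hP; set B := dsubmx P in uP hP.
rewrite tr_col_mx mul_col_mx mul_col_row in hP.
case/eq_block_mx: hP => tT _ BTt BTB.
have uPt : (col_mx t B)^T \in unitmx by rewrite unitmx_tr.
have BT0 : B *m T = 0.
  have h : (B *m T) *m (col_mx t B)^T = 0 by rewrite tr_col_mx mul_mx_row BTt BTB row_mx0.
  by rewrite -[B *m T](mulmxK uPt) h mul0mx.
set M := B *m Gm *m B^T.
have fM : forall x y : 'rV_n, x *m M *m y^T = (x *m B) *m Gm *m (y *m B)^T.
  by move=> x y; rewrite /M trmx_mul !mulmxA.
have kB : forall x : 'rV_n, inKer T (x *m B) by move=> x; rewrite /inKer -mulmxA BT0 mulmx0.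
have sM : M^T = M.
  apply: symm_form => x y; rewrite !fM; exact: symG.
have pM : forall x : 'rV_n, x != 0 -> 0 < (x *m M *m x^T) 0 0.
  move=> x xN0; rewrite fM; apply: posG => //.
  apply: contra xN0 => /eqP h.
  have : row_mx (0 : 'rV_(p.+1)) x = 0.
    by rewrite -[row_mx _ _](mulmxK uP) mul_row_col mul0mx add0r h mul0mx.
  by rewrite -row_mx0 => /eq_row_mx [_ ->].
have [Q hQ] := pd_congr _ _ _ sM pM.
have uQ : Q \in unitmx.
  by case: (mulmx1_unit hQ) => _; rewrite unitmx_tr.
exists (col_mx t (Q *m B)).
rewrite /in_fp /frame_tau /frame_e col_mxKu col_mxKd.
split; [|split; [|split]] => //.
- rewrite (_ : col_mx _ _ = block_mx 1%:M 0 0 Q *m col_mx t B); last first.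
    by rewrite mul_block_col !mul0mx mul1mx addr0 add0r.
  by rewrite unitmx_mul uP andbT unitmxE det_lblock det1 mul1r -unitmxE.
- by move=> i; rewrite /inKer row_mul -mulmxA BT0 mulmx0.
- by rewrite quad2 hQ.
Qed.

Theorem proposition1 (R : realType) (p n : nat) (T Gm : 'M[R]_(p.+1 + n)) :
  T^T = T ->
  lorentzian_rank T ->
  pos_metric_on_ker T Gm ->
  (* the formula maps f_p into itself for g in G_p *)
  (forall F g : 'M[R]_(p.+1 + n), in_fp T Gm F -> inGp g -> in_fp T Gm (frame_act F g)) /\
  (* it is a right action *)
  (forall F : 'M[R]_(p.+1 + n), frame_act F 1%:M = F) /\
  (forall F g h : 'M[R]_(p.+1 + n), inGp g -> inGp h ->
     frame_act F (g *m h) = frame_act (frame_act F g) h) /\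
  (* f_p is nonempty (torsor) *)
  (exists F : 'M[R]_(p.+1 + n), in_fp T Gm F) /\
  (* free and transitive *)
  (forall F1 F2 : 'M[R]_(p.+1 + n), in_fp T Gm F1 -> in_fp T Gm F2 ->
     exists! g : 'M[R]_(p.+1 + n), inGp g /\ frame_act F1 g = F2).
Proof.
move=> sT hL hG.
split.
  move=> F g hF [L [v [Q [hL' [hQ ->]]]]].
  rewrite -[F]vsubmxK in hF *; exact: closure.
split.
  by move=> F; rewrite /frame_act trmx1 mul1mx.
split.
  by move=> F g h _ _; rewrite /frame_act trmx_mul mulmxA.
split; first exact: exists_frame.
move=> F1 F2 h1 h2.
rewrite -[F1]vsubmxK -[F2]vsubmxK in h1 h2 *.
exact: (frame_trans _ _ _ _ _ _ _ _ _ sT h1 h2).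
Qed.
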